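(* For $q\ge1$, the generating function $P_{q,1}(x)=\sum_{n\ge0}p_nx^n$, where $p_n$ is the total number of occurrences of the letter $1$ in all $q$-decreasing words of length $n$, is $$P_{q,1}(x)=\frac{x\left(1-qx^q+qx^{q+1}-2x^{q+1}+x^{2q+2}\right)}{\left(1-2x+x^{q+2}\right)^2},$$ and the generating function for the total number of occurrences of the letter $0$ in all $q$-decreasing words of length $n$ is $$P_{q,0}(x)=\frac{x\left(1-x^q\right)}{\left(1-2x+x^{q+2}\right)^2}.$$
   Context: For $q\ge1$, a binary word is $q$-decreasing if for every maximal run of $0$s, of length $a>0$, together with the (possibly empty) maximal run of $1$s immediately following it, of length $b$, one has $q\cdot a>b$. *)

(* Defs.v *)
From mathcomp Require Import all_boot all_order all_algebra.
Set Implicit Arguments. Unset Strict Implicit. Unset Printing Implicit Defensive.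
Import GRing.Theory.

(* Binary words are [seq bool]: letter 0 = false, letter 1 = true. *)

(* [qdec q w]: for every maximal run of 0s of length a > 0 together with the
   (possibly empty) maximal run of 1s immediately following it, of length b,
   we have q * a > b.  The run pair is located as w = u ++ 0^a ++ 1^b ++ v,
   where u = take i w, v = drop (i+a+b) w; maximality means: u is empty or
   ends with 1, v is empty or starts with 0, and if b = 0 then v is empty. *)
Definition qdec (q : nat) (w : seq bool) : bool :=
  [forall i : 'I_(size w).+1, forall a : 'I_(size w).+1, forall b : 'I_(size w).+1,
    let u := take i w in
    let v := drop (i + a + b) w in
    [&& w == u ++ nseq a false ++ nseq b true ++ v, 0 < a, last true u,
        ~~ head false v & (0 < b) || (v == [::])] ==> (b < q * a)].

Definition p1 (q n : nat) : nat :=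
  \sum_(w : n.-tuple bool | qdec q w) count (fun c => c == true) w.
Definition p0 (q n : nat) : nat :=
  \sum_(w : n.-tuple bool | qdec q w) count (fun c => c == false) w.

Local Open Scope ring_scope.

Definition gf_trunc (f : nat -> nat) (N : nat) : {poly int} :=
  \poly_(i < N) (f i)%:R.

Definition den (q : nat) : {poly int} := 1 - 2%:R *: 'X + 'X^(q + 2).

Definition num1 (q : nat) : {poly int} :=
  'X * (1 - q%:R *: 'X^q + q%:R *: 'X^(q + 1) - 2%:R *: 'X^(q + 1) + 'X^(2 * q + 2)).

Definition num0 (q : nat) : {poly int} := 'X * (1 - 'X^q).

(* Main.v *)
Require Import Defs.
From mathcomp Require Import all_boot all_order all_algebra.
From mathcomp Require Import zify ring lra.
Set Implicit Arguments. Unset Strict Implicit. Unset Printing Implicit Defensive.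
Import GRing.Theory.

Local Close Scope ring_scope.
Local Open Scope ring_scope.

Fixpoint allw (n : nat) : seq (seq bool) :=
  match n with
  | 0 => [:: [::]]
  | n'.+1 => [seq rcons w b | w <- allw n', b <- [:: false; true]]
  end.

Definition sumw n (G : seq bool -> int) := \sum_(w <- allw n) G w.

Lemma sumw0 G : sumw 0 G = G [::].
Proof. by rewrite /sumw /= big_cons big_nil addr0. Qed.

Lemma sumwS n G : sumw n.+1 G = sumw n (fun w => G (rcons w false) + G (rcons w true)).
Proof.
rewrite /sumw; change (allw n.+1) with [seq rcons w b | w <- allw n, b <- [:: false; true]].
rewrite big_allpairs_dep; apply: eq_bigr => w _.
by rewrite !big_cons big_nil /= addr0.
Qed.

Lemma mem_allw n s : (s \in allw n) = (size s == n).
Proof.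
elim: n s => [|n IH] s.
  by case: s.
apply/allpairsPdep/idP => [[w [b [Hw _ ->]]]|].
  by rewrite size_rcons eqSS -IH.
case/lastP: s => [//|s b]; rewrite size_rcons eqSS => Hs.
exists s, b; split => //; first by rewrite IH.
by case: b.
Qed.

Lemma uniq_allw n : uniq (allw n).
Proof.
elim: n => [//|n IH].
change (uniq [seq rcons w b | w <- allw n, b <- [:: false; true]]).
apply: allpairs_uniq => //.
by move=> [w1 b1] [w2 b2] _ _ /= /rcons_inj [-> ->].
Qed.

Lemma sumw_tuple n (G : seq bool -> int) :
  \sum_(w : n.-tuple bool) G w = sumw n G.
Proof.
rewrite /sumw -(big_map (@tval n bool) xpredT G).
apply: perm_big; apply: uniq_perm.
- by rewrite map_inj_uniq ?index_enum_uniq //; exact: val_inj.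
- exact: uniq_allw.
move=> s; rewrite mem_allw; apply/mapP/idP => [[t _ ->]|Hs].
  by rewrite size_tuple.
by exists (Tuple Hs) => //; rewrite mem_index_enum.
Qed.

Lemma sumw_ext n G H : (forall w, size w = n -> G w = H w) -> sumw n G = sumw n H.
Proof.
move=> E; rewrite /sumw big_seq_cond [RHS]big_seq_cond; apply: eq_bigr => w.
by rewrite andbT mem_allw => /eqP /E.
Qed.

Lemma sumwD n G H : sumw n (fun w => G w + H w) = sumw n G + sumw n H.
Proof. exact: big_split. Qed.

Lemma sumwN n G : sumw n (fun w => - G w) = - sumw n G.
Proof. by rewrite /sumw sumrN. Qed.

Lemma sumwZ n c G : sumw n (fun w => c * G w) = c * sumw n G.
Proof. by rewrite /sumw mulr_sumr. Qed.

Lemma sumw_eq0 n G : (forall w, size w = n -> G w = 0) -> sumw n G = 0.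
Proof.
move=> E; rewrite (@sumw_ext n G (fun _ => 0)) //.
by rewrite /sumw big1.
Qed.

Lemma sumw_cat k l G :
  sumw (k + l) G = sumw k (fun u => sumw l (fun v => G (u ++ v))).
Proof.
elim: l G => [|l IH] G.
  by rewrite addn0; apply: sumw_ext => w _; rewrite sumw0 cats0.
rewrite addnS sumwS IH; apply: sumw_ext => u _.
by rewrite sumwS; apply: sumw_ext => v _; rewrite !rcons_cat.
Qed.

Lemma sumw_delta l v0 (H : int) : size v0 = l ->
  sumw l (fun v => if v == v0 then H else 0) = H.
Proof.
elim: l v0 => [|l IH] v0.
  by case: v0 => // _; rewrite sumw0.
case/lastP: v0 => [//|v0 b]; rewrite size_rcons => -[Hs].
rewrite sumwS -[RHS](IH v0 Hs); apply: sumw_ext => w _.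
have E1 : (false == true) = false by [].
have E2 : (true == false) = false by [].
case: b; rewrite !eqseq_rcons !eqxx ?E1 ?E2 ?andbT ?andbF ?addr0 ?add0r //.
Qed.

Local Close Scope ring_scope.

Definition QD (q : nat) (w : seq bool) : Prop :=
  forall u a b v, w = u ++ nseq a false ++ nseq b true ++ v -> 0 < a ->
    last true u -> ~~ head false v -> (0 < b) || (v == [::]) -> b < q * a.

Lemma qdecP q w : qdec q w <-> QD q w.
Proof.
split.
  move/forallP => H u a b v E ha hu hv hb.
  have Hs : size w = (size u + a + b + size v)%N.
    by rewrite E !size_cat !size_nseq !addnA.
  have Hi : size u < (size w).+1 by lia.
  have Ha : a < (size w).+1 by lia.
  have Hb : b < (size w).+1 by lia.
  move: (H (Ordinal Hi)) => /forallP /(_ (Ordinal Ha)) /forallP /(_ (Ordinal Hb)) /implyP.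
  apply => /=.
  have Et : take (size u) w = u by rewrite E take_size_cat.
  have Ed : drop (size u + a + b) w = v.
    by rewrite E catA catA drop_size_cat // !size_cat !size_nseq.
  rewrite Et Ed -E eqxx ha hu hv hb //.
move=> H; apply/forallP => i; apply/forallP => a; apply/forallP => b; apply/implyP.
move=> /and5P [E ha hu hv hb]; exact: (H _ _ _ _ (eqP E)).
Qed.

Lemma nseqSr n (x : bool) : nseq n.+1 x = rcons (nseq n x) x.
Proof. by elim: n => //= n <-. Qed.

Lemma head_rcons (v : seq bool) y : head false (rcons v y) = if v is [::] then y else head false v.
Proof. by case: v. Qed.

Lemma QD_nil q : QD q [::].
Proof.
move=> u a b v E ha; have := congr1 size E; rewrite !size_cat size_nseq /=; lia.
Qed.

Lemma QD0 q w : 0 < q -> QD q (rcons w false) <-> QD q w.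
Proof.
move=> hq; split => H u a b v.
- case: v => [|y v'] E ha hu hv hb.
  + case: b E hb => [|b] E hb; first by rewrite muln_gt0 hq ha.
    apply: (H u a b.+1 [:: false]) => //.
    by rewrite E cats0 -cats1 -!catA.
  + have hb' : 0 < b by move: hb; rewrite orbF.
    apply: (H u a b (rcons (y :: v') false)) => //.
    by rewrite E -!rcons_cat.
- case/lastP: v => [|v' y] E ha hu hv hb.
  + case: b E hb => [|b] E hb; first by rewrite muln_gt0 hq ha.
    have := congr1 (last true) E.
    by rewrite cats0 nseqSr -!rcons_cat !last_rcons.
  + move: E; rewrite -!rcons_cat => /rcons_inj [E _].
    apply: (H u a b v' E) => //.
      by move: hv; rewrite head_rcons; case: (v').
    by move: hb; case: (b) => //=; rewrite -size_eq0 size_rcons.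
Qed.

Local Close Scope ring_scope.

Definition pat q a := nseq a false ++ nseq (q * a - 1) true.

Definition tight q a (w : seq bool) : bool :=
  [&& 0 < a, (a + (q * a - 1)) <= size w,
      drop (size w - (a + (q * a - 1))) w == pat q a &
      last true (take (size w - (a + (q * a - 1))) w)].

Lemma size_pat q a : size (pat q a) = (a + (q * a - 1))%N.
Proof. by rewrite /pat size_cat !size_nseq. Qed.

Lemma tight_cat q a u v : size v = (a + (q * a - 1))%N ->
  tight q a (u ++ v) = [&& 0 < a, v == pat q a & last true u].
Proof.
move=> Hv; rewrite /tight size_cat -Hv leq_addl addnK drop_size_cat // take_size_cat //.
Qed.

Lemma tightP q a w : reflect (0 < a /\ exists u, last true u /\ w = u ++ pat q a) (tight q a w).
Proof.
apply: (iffP idP).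
  case/and4P => ha hs /eqP hd ht; split => //.
  by exists (take (size w - (a + (q * a - 1))) w); split => //; rewrite -hd cat_take_drop.
move=> [ha [u [hu ->]]]; rewrite tight_cat ?size_pat //.
by rewrite ha eqxx hu.
Qed.

Definition trc (x : bool) (s : seq bool) := find (fun y => y != x) (rev s).

Lemma trc1 u a b : 0 < a -> trc true (u ++ nseq a false ++ nseq b true) = b.
Proof.
move=> ha; rewrite /trc !rev_cat !rev_nseq -catA find_cat has_nseq /= andbF.
rewrite size_nseq; case: a ha => // a _ /=; by rewrite addn0.
Qed.

Lemma trc0 u a : last true u -> trc false (u ++ nseq a false) = a.
Proof.
move=> hu; rewrite /trc !rev_cat !rev_nseq find_cat has_nseq /= andbF size_nseq.
case/lastP: u hu => [|u y] /=; first by rewrite addn0.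
by rewrite last_rcons rev_rcons => -> /=; rewrite addn0.
Qed.

Lemma catIs (s1 s2 s3 : seq bool) : s1 ++ s3 = s2 ++ s3 -> s1 = s2.
Proof.
move=> E; have Hs : size s1 = size s2.
  by have := congr1 size E; rewrite !size_cat => /eqP; rewrite eqn_add2r => /eqP.
by move/eqP: E; rewrite eqseq_cat // => /andP [/eqP].
Qed.

Lemma UQ u u' a a' b b' : last true u -> last true u' -> 0 < a -> 0 < a' ->
  u ++ nseq a false ++ nseq b true = u' ++ nseq a' false ++ nseq b' true ->
  a = a' /\ b = b'.
Proof.
move=> hu hu' ha ha' E.
have Eb : b = b' by rewrite -(trc1 u b ha) -(trc1 u' b' ha') E.
subst b'; split => //.
move: E; rewrite !catA => /catIs E.
by rewrite -(trc0 a hu) -(trc0 a' hu') E.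
Qed.

Lemma tight_uniq q a a' w : 0 < q -> tight q a w -> tight q a' w -> a = a'.
Proof.
move=> hq /tightP [ha [u [hu E]]] /tightP [ha' [u' [hu' E']]].
rewrite /pat in E E'; rewrite E in E'.
by case: (UQ hu hu' ha ha' E').
Qed.

Lemma tight_le q a w : tight q a w -> a <= size w.
Proof. by case/and4P => _ hs _ _; apply: leq_trans hs; exact: leq_addr. Qed.

Lemma QD1 q w : 0 < q -> QD q (rcons w true) <-> QD q w /\ (forall a, ~~ tight q a w).
Proof.
move=> hq; split.
  move=> H; split.
    move=> u a b v; case: v => [|y v'] E ha hu hv hb.
    + have: b.+1 < q * a; last by move/ltnW.
      apply: (H u a b.+1 [::]) => //.
      by rewrite E !cats0 nseqSr !rcons_cat.
    + have hb' : 0 < b by move: hb; rewrite orbF.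
      apply: (H u a b (rcons (y :: v') true)) => //.
      by rewrite E -!rcons_cat.
  move=> a; apply/negP => /tightP [ha [u [hu E]]].
  have qa : 0 < q * a by rewrite muln_gt0 hq ha.
  suff: q * a < q * a by rewrite ltnn.
  apply: (H u a (q * a) [::]) => //.
    by rewrite E /pat cats0 -{2}(prednK qa) nseqSr -!rcons_cat subn1.
  by rewrite qa.
move=> [H NT] u a b v.
case/lastP: v => [|v' y] E ha hu hv hb.
- case: b E hb => [|b] E hb.
    have := congr1 (last true) E.
    by rewrite cats0 last_rcons; case: a ha {E} => // a _; rewrite nseqSr cats0 last_cat last_rcons.
  move: E; rewrite cats0 nseqSr -!rcons_cat => /rcons_inj [] E.
  have H1 : b < q * a.
    apply: (H u a b [::]) => //; first by rewrite cats0.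
    by rewrite eqxx orbT.
  case: (ltngtP b.+1 (q * a)) => // Hc.
  + lia.
  + have := NT a; rewrite (_ : tight q a w = true) //.
    apply/tightP; split => //; exists u; split => //.
    by rewrite E /pat -Hc subn1 /=.
- move: E; rewrite -!rcons_cat => /rcons_inj [E _].
  apply: (H u a b v' E) => //.
    by move: hv; rewrite head_rcons; case: (v').
  by move: hb; case: (b) => //=; rewrite -size_eq0 size_rcons.
Qed.

Local Close Scope ring_scope.

Lemma QDz q u a : 0 < q -> QD q (u ++ nseq a false) <-> QD q u.
Proof.
move=> hq; elim: a => [|a IH]; first by rewrite cats0.
by rewrite nseqSr -rcons_cat QD0.
Qed.

Lemma notight q u a b : 0 < q -> last true u -> 0 < a ->
  (forall a', ~~ tight q a' (u ++ nseq a false ++ nseq b true)) <-> b != q * a - 1.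
Proof.
move=> hq hu ha; split.
  move=> NT; apply/eqP => Eb; have := NT a; rewrite (_ : tight _ _ _ = true) //.
  by apply/tightP; split => //; exists u; split => //; rewrite /pat Eb.
move=> Hb a'; apply/negP => /tightP [ha' [u' [hu' E]]].
rewrite /pat in E; case: (UQ hu hu' ha ha' E) => Ea Eb.
by move: Hb; rewrite Eb Ea eqxx.
Qed.

Lemma QDcat q u a b : 0 < q -> last true u -> 0 < a ->
  QD q (u ++ nseq a false ++ nseq b true) <-> QD q u /\ b < q * a.
Proof.
move=> hq hu ha; elim: b => [|b IH].
  rewrite cats0 QDz //; have -> : 0 < q * a by rewrite muln_gt0 hq ha.
  by split => // -[].
rewrite nseqSr -!rcons_cat QD1 // IH notight //.
have qa : 0 < q * a by rewrite muln_gt0 hq ha.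
split.
  by move=> [[Hu Hb] Hn]; split => //; move: Hn => /eqP; lia.
by move=> [Hu Hb]; split; [split => //; lia | apply/eqP; lia].
Qed.

Lemma qdec_nil q : qdec q [::].
Proof. by apply/qdecP; exact: QD_nil. Qed.

Lemma qdec0 q w : 0 < q -> qdec q (rcons w false) = qdec q w.
Proof. by move=> hq; apply/idP/idP => /qdecP H; apply/qdecP; move: H; rewrite QD0. Qed.

Definition tt q (w : seq bool) := [exists a : 'I_(size w).+1, tight q a w].

Lemma ttP q w : reflect (exists a, tight q a w) (tt q w).
Proof.
apply: (iffP existsP) => [[a Ha]|[a Ha]]; first by exists a.
have Hl := tight_le Ha.
by exists (Ordinal (n := (size w).+1) (m := a) Hl).
Qed.

Lemma qdec1 q w : 0 < q -> qdec q (rcons w true) = qdec q w && ~~ tt q w.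
Proof.
move=> hq; apply/idP/idP.
  move/qdecP/QD1 => /(_ hq) [H NT]; apply/andP; split; first by apply/qdecP.
  by apply/negP => /ttP [a Ha]; move: (NT a); rewrite Ha.
case/andP => /qdecP H /ttP NT; apply/qdecP/QD1 => //; split => // a.
by apply/negP => Ha; apply: NT; exists a.
Qed.

Lemma qdec_cat q u a b : 0 < q -> last true u -> 0 < a ->
  qdec q (u ++ nseq a false ++ nseq b true) = qdec q u && (b < q * a).
Proof.
move=> hq hu ha; apply/idP/idP.
  by move/qdecP/QDcat => /(_ hq hu ha) [/qdecP -> ->].
by case/andP => /qdecP Hu Hb; apply/qdecP/QDcat.
Qed.

Local Open Scope ring_scope.

Lemma tt_sum q w (G : int) : (0 < q)%N ->
  (if tt q w then G else 0) = \sum_(a < (size w).+1) (if tight q a w then G else 0).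
Proof.
move=> hq; case: ifP => [/existsP [a0 Ha0]|Hn].
  rewrite (bigD1 a0) //= Ha0 big1 ?addr0 // => a /negP Hne.
  case: ifP => // Ha; exfalso; apply: Hne; apply/eqP/val_inj => /=.
  exact: (tight_uniq hq Ha Ha0).
rewrite big1 // => a _; case: ifP => // Ha.
by move: Hn; rewrite (_ : tt q w = true) //; apply/ttP; exists a.
Qed.

Local Close Scope ring_scope.
Local Open Scope ring_scope.

Definition wtc (l : bool) (w : seq bool) : int := (count (fun c => c == l) w)%:R.
Definition phi l (al be : int) w := al + be * wtc l w.
Definition Sg q l al be n := sumw n (fun w => if qdec q w then phi l al be w else 0).
Definition Fg q l al be n := sumw n (fun w => if qdec q w && last true w then phi l al be w else 0).
Definition Tg q l al be n := sumw n (fun w => if qdec q w && tt q w then phi l al be w else 0).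
Definition TK q l al be n a := sumw n (fun w => if qdec q w && tight q a w then phi l al be w else 0).

Lemma phi_rcons l al be w x : phi l al be (rcons w x) = phi l al be w + be * (x == l)%:R.
Proof. rewrite /phi /wtc -cats1 count_cat /= addn0 natrD; ring. Qed.

Lemma phi_cat l al be u v : phi l al be (u ++ v) = phi l al be u + be * wtc l v.
Proof. rewrite /phi /wtc count_cat natrD; ring. Qed.

Ltac collapse := repeat rewrite -?sumwN -?sumwD -?sumwZ.

Lemma Sg0 q l al be : Sg q l al be 0 = al.
Proof. by rewrite /Sg sumw0 qdec_nil /phi /wtc /= mulr0 addr0. Qed.

Lemma Fg0 q l al be : Fg q l al be 0 = al.
Proof. by rewrite /Fg sumw0 qdec_nil /phi /wtc /= mulr0 addr0. Qed.

Lemma SgS q l al be n : (0 < q)%N ->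
  Sg q l al be n.+1 = Sg q l al be n + Sg q l al be n - Tg q l al be n
    + be * ((if l then 0 else 1) * Sg q l 1 0 n)
    + be * ((if l then 1 else 0) * (Sg q l 1 0 n - Tg q l 1 0 n)).
Proof.
move=> hq; rewrite /Sg /Tg sumwS; collapse; apply: sumw_ext => w _.
rewrite qdec0 // qdec1 // !phi_rcons.
case: (qdec q w); case: (tt q w); case: l; rewrite /phi /=; ring.
Qed.

Lemma FgS q l al be n : (0 < q)%N ->
  Fg q l al be n.+1 = Sg q l al be n.+1 - Sg q l al be n
    - be * ((if l then 0 else 1) * Sg q l 1 0 n).
Proof.
move=> hq; rewrite /Fg /Sg !sumwS; collapse; apply: sumw_ext => w _.
rewrite qdec0 // qdec1 // !phi_rcons !last_rcons.
case: (qdec q w); case: (tt q w); case: l; rewrite /phi /= ?andbF ?andbT; ring.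
Qed.

Local Close Scope ring_scope.
Local Open Scope ring_scope.


Lemma TK_fit q l al be m a : (0 < q)%N -> (0 < a)%N -> (a + (q * a - 1) <= m)%N ->
  TK q l al be m a = Fg q l al be (m - (a + (q * a - 1)))
     + be * wtc l (pat q a) * Fg q l 1 0 (m - (a + (q * a - 1))).
Proof.
move=> hq ha hL.
have [k ->] : exists k, m = (k + (a + (q * a - 1)))%N by exists (m - (a + (q * a - 1)))%N; lia.
rewrite addnK /TK sumw_cat /Fg; collapse; apply: sumw_ext => u Hu.
transitivity (sumw (a + (q * a - 1)) (fun v => if v == pat q a then
   (if qdec q u && last true u then phi l al be u + be * wtc l (pat q a) else 0) else 0)).
  apply: sumw_ext => v Hv; rewrite tight_cat // ha /=.
  case: eqP => [->|]; last by rewrite andbF.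
  case hu: (last true u); rewrite ?andbF ?andbT //.
  rewrite /pat qdec_cat //.
  have hqa : (0 < q * a)%N by rewrite muln_gt0 hq ha.
  have -> : (q * a - 1 < q * a)%N by lia.
  by rewrite andbT phi_cat.
rewrite sumw_delta ?size_pat //.
case: (qdec q u && last true u); rewrite /phi; ring.
Qed.

Lemma TK_nofit q l al be m a : ~~ ((0 < a) && (a + (q * a - 1) <= m))%N ->
  TK q l al be m a = 0.
Proof.
move=> H; apply: sumw_eq0 => w Hw.
case: ifP => // /andP [_ /and4P [ha hs _ _]].
by move: H; rewrite ha -Hw hs.
Qed.

Lemma Tg_sum q l al be m : (0 < q)%N ->
  Tg q l al be m = \sum_(a < m.+1) TK q l al be m a.
Proof.
move=> hq; rewrite /Tg /TK.
rewrite (@sumw_ext m _ (fun w => \sum_(a < m.+1)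
   (if qdec q w && tight q a w then phi l al be w else 0))); last first.
  move=> w Hw; case: (qdec q w) => /=; last by rewrite big1.
  by rewrite (tt_sum _ _ hq) Hw.
by rewrite /sumw exchange_big.
Qed.

Lemma Tg_widen q l al be m B : (0 < q)%N -> (m < B)%N ->
  \sum_(0 <= a < B) TK q l al be m a = Tg q l al be m.
Proof.
move=> hq hB; rewrite Tg_sum // big_mkord (big_ord_widen B (fun a => TK q l al be m a) hB).
rewrite [RHS]big_mkcond; apply: eq_bigr => a _; case: ifP => // Ha.
rewrite TK_nofit //; apply/negP => /andP [_ H]; move/negbT: Ha; lia.
Qed.

Lemma wtc_pat l q a : (0 < q)%N ->
  wtc l (pat q a.+2) = wtc l (pat q a.+1) + (if l then q else 1%N)%:R.
Proof.
move=> hq; rewrite /wtc /pat !count_cat !count_nseq -natrD; congr (_ %:R).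
case: l => /=; rewrite !mulnS; lia.
Qed.

Lemma TgR q l al be m : (0 < q)%N ->
  Tg q l al be m =
    (if (q <= m)%N then Fg q l al be (m - q) + be * (if l then (q - 1)%N else 1%N)%:R * Fg q l 1 0 (m - q) else 0)
  + (if (q.+1 <= m)%N then Tg q l al be (m - q.+1) + be * (if l then q else 1%N)%:R * Tg q l 1 0 (m - q.+1) else 0).
Proof.
move=> hq; rewrite -(@Tg_widen q l al be m m.+2) //.
rewrite big_nat_recl // big_nat_recl // TK_nofit // add0r.
congr (_ + _).
  case: ifP => Hq.
    have Eq1 : (1 + (q * 1 - 1))%N = q by rewrite muln1; lia.
    rewrite (@TK_fit q l al be m 1) //; last by rewrite Eq1.
    rewrite Eq1; congr (_ + _ * _ * _); rewrite /wtc /pat count_cat !count_nseq muln1.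
    by case: l; rewrite /= ?muln1 ?mul1n ?mul0n ?addn0 ?add0n.
  rewrite (@TK_nofit q l al be m 1) //.
  by apply/negP => /andP [_ H]; move/negbT: Hq; rewrite muln1 in H; lia.
case: ifP => Hq.
  rewrite -(@Tg_widen q l al be (m - q.+1) m.+1) //; last lia.
  rewrite -(@Tg_widen q l 1 0 (m - q.+1) m.+1) //; last lia.
  rewrite big_nat_recl // TK_nofit // add0r.
  rewrite [in X in _ + _ * X]big_nat_recl // TK_nofit // add0r.
  rewrite mulr_sumr -big_split; apply: eq_bigr => a _.
  have E1 : (q * a.+2 = q + q * a.+1)%N by rewrite mulnS.
  have E2 : (q * a.+1 = q + q * a)%N by rewrite mulnS.
  case: (boolP (a.+2 + (q * a.+2 - 1) <= m)%N) => Hf.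
    have hf1 : (a.+1 + (q * a.+1 - 1) <= m - q.+1)%N by lia.
    rewrite (@TK_fit q l al be m a.+2) // (@TK_fit q l al be _ a.+1) // (@TK_fit q l 1 0 _ a.+1) //.
    have -> : (m - q.+1 - (a.+1 + (q * a.+1 - 1)) = m - (a.+2 + (q * a.+2 - 1)))%N by lia.
    rewrite wtc_pat // /=; ring.
  have hf1 : ~~ ((0 < a.+1) && (a.+1 + (q * a.+1 - 1) <= m - q.+1))%N.
    by apply/negP => /andP [_ H]; move/negP: Hf; apply; lia.
  rewrite (@TK_nofit q l al be m a.+2) // (@TK_nofit q l al be _ a.+1) // (@TK_nofit q l 1 0 _ a.+1) //.
    by rewrite /= mulr0 addr0.
rewrite big1 // => a _; rewrite TK_nofit //.
have E1 : (q * a.+2 = q + q * a.+1)%N by rewrite mulnS.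
apply/negP => /andP [_ H]; move/negbT: Hq; rewrite -ltnNge; lia.
Qed.

Local Close Scope ring_scope.
Local Open Scope ring_scope.

Definition Zq (N : nat) (p : {poly int}) := forall i, (i < N)%N -> p`_i = 0.

Lemma ZqD N p r : Zq N p -> Zq N r -> Zq N (p + r).
Proof. by move=> Hp Hr i Hi; rewrite coefD Hp // Hr // addr0. Qed.

Lemma ZqM N a p : Zq N p -> Zq N (a * p).
Proof.
move=> Hp i Hi; rewrite coefM big1 // => j _; rewrite Hp ?mulr0 //.
by apply: leq_ltn_trans Hi; apply: leq_subr.
Qed.

Definition gp (f : nat -> int) N : {poly int} := \poly_(i < N) f i.

Lemma ZB (q : nat) (l : bool) (al be : int) (N : nat) (hq : (0 < q)%N) : Zq N ((gp (Sg q l al be) N) - al%:P - ('X * (gp (Sg q l al be) N)) *+ 2 + 'X * (gp (Tg q l al be) N) - (be * (if l then 0 else 1 : int))%:P * ('X * (gp (Sg q l 1 0) N))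
                  - (be * (if l then 1 else 0 : int))%:P * ('X * ((gp (Sg q l 1 0) N) - (gp (Tg q l 1 0) N)))).
Proof.
move=> i Hi; rewrite !(coefD, coefN, coefB, coefCM, coefXM, coefC, coefMn).
rewrite /gp; case: i Hi => [|n] Hi /=.
  by rewrite !coef_poly Hi Sg0; ring.
rewrite !coef_poly Hi (ltnW Hi) SgS //; ring.
Qed.

Lemma ZD (q : nat) (l : bool) (al be : int) (N : nat) (hq : (0 < q)%N) : Zq N ((gp (Fg q l al be) N) - (gp (Sg q l al be) N) + 'X * (gp (Sg q l al be) N) + (be * (if l then 0 else 1 : int))%:P * ('X * (gp (Sg q l 1 0) N))).
Proof.
move=> i Hi; rewrite !(coefD, coefN, coefB, coefCM, coefXM, coefC, coefMn).
rewrite /gp; case: i Hi => [|n] Hi /=.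
  by rewrite !coef_poly Hi Sg0 Fg0; ring.
rewrite !coef_poly Hi (ltnW Hi) FgS //; ring.
Qed.

Lemma ZF (q : nat) (l : bool) (al be : int) (N : nat) (hq : (0 < q)%N) : Zq N ((gp (Tg q l al be) N) - 'X^q * ((gp (Fg q l al be) N) + (be * ((if l then (q - 1)%N else 1%N)%:R : int))%:P * (gp (Fg q l 1 0) N)) - 'X^(q.+1) * ((gp (Tg q l al be) N) + (be * ((if l then q else 1%N)%:R : int))%:P * (gp (Tg q l 1 0) N))).
Proof.
move=> i Hi; rewrite !(coefD, coefN, coefB, coefCM, coefXnM).
rewrite /gp !coef_poly Hi.
have H1 : (i - q < N)%N by lia.
have H2 : (i - q.+1 < N)%N by lia.
rewrite H1 H2 (TgR _ _ _ _ hq).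
case: (ltnP i q) => Ha; case: (ltnP i q.+1) => Hb; try lia; ring.
Qed.


Local Close Scope ring_scope.
Local Open Scope ring_scope.

Lemma Zq6 N r1 r2 r3 r4 r5 r6 k1 k2 k3 k4 k5 k6 p :
  Zq N r1 -> Zq N r2 -> Zq N r3 -> Zq N r4 -> Zq N r5 -> Zq N r6 ->
  p = k1 * r1 + k2 * r2 + k3 * r3 + k4 * r4 + k5 * r5 + k6 * r6 -> Zq N p.
Proof.
move=> h1 h2 h3 h4 h5 h6 ->.
by do ! apply: ZqD; apply: ZqM.
Qed.

Lemma take_eq N a b : Zq N (a - b) -> take_poly N a = take_poly N b.
Proof.
move=> H; apply/polyP => i; rewrite !coef_take_poly; case: ifP => // Hi.
by apply/eqP; rewrite -subr_eq0 -coefB; apply/eqP; apply: H.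
Qed.

Lemma gf_link q l n :
  (\sum_(w : n.-tuple bool | qdec q w) count (fun c => c == l) w)%:R = Sg q l 0 1 n.
Proof.
rewrite natr_sum big_mkcond.
rewrite (sumw_tuple n (fun s => if qdec q s then (count (fun c => c == l) s)%:R else 0)).
apply: sumw_ext => w _; rewrite /phi /wtc; case: ifP => _ //; ring.
Qed.

Lemma main_rel q l N : (0 < q)%N ->
  Zq N (den q ^+ 2 * gp (Sg q l 0 1) N - (if l then num1 q else num0 q)).
Proof.
move=> hq; case: l.
- set x : {poly int} := 'X.
  set y : {poly int} := 'X^q.
  set S := gp (Sg q true 0 1) N.
  set TS := gp (Tg q true 0 1) N.
  set FS := gp (Fg q true 0 1) N.
  set C := gp (Sg q true 1 0) N.
  set T := gp (Tg q true 1 0) N.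
  set F := gp (Fg q true 1 0) N.
  have hA := @ZB q true 1 0 N hq.
  have hC := @ZD q true 1 0 N hq.
  have hE := @ZF q true 1 0 N hq.
  have hB := @ZB q true 0 1 N hq.
  have hD := @ZD q true 0 1 N hq.
  have hF := @ZF q true 0 1 N hq.
  rewrite -/x -/y -/S -/TS -/FS -/C -/T -/F in hA hC hE hB hD hF.
  have Dd : den q = 1 - 2%:R * x + y * x * x.
    rewrite /den -mul_polyC polyCMn polyC1 exprD -/y expr2 -/x; ring.
  have Xs : 'X^(q.+1) = y * x :> {poly int} by rewrite exprSr.
  rewrite Xs in hE hF.
  have Eq : (q%:R : {poly int}) = (q - 1)%N%:R + 1.
    by rewrite natr1 subn1 prednK.

  rewrite /= in hA hC hE hB hD hF.
  pose e0 : {poly int} := 0. pose e1 : {poly int} := 1.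
  pose w1 : {poly int} := ((q - 1)%N)%:R. pose w2 : {poly int} := q%:R.
  pose al := (1 - x * y) * x + e0 * x * x * y - x * y * w1 * (1 - x).
  pose be := - e1 * x * (1 - x * y) - x * x * y * w2.
  pose den2 := 1 - 2%:R * x + y * x * x.
  apply: (Zq6 hB hF hD hC hA hE (k1 := den2 * (1 - x * y)) (k2 := - den2 * x) (k3 := - den2 * x * y)
    (k4 := - den2 * x * y * w1 - al * x * y + be * (1 - 2%:R * x) * y)
    (k5 := al * (1 - x * y) + be * y * (1 - x)) (k6 := - al * x + be * (1 - 2%:R * x))).
  rewrite Dd /num1 -!mul_polyC !polyCMn !polyC1 !exprD -/y !expr1 expr0 -/x.
  rewrite /al /be /den2 /e0 /e1 /w1 /w2.
  rewrite !(mul0r, mul1r, polyC0, polyC1, mulr0, subr0, addr0, mul1r) ?polyCMn ?polyC1 !Eq.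
  clearbody x y S TS FS C T F. ring.
- set x : {poly int} := 'X.
  set y : {poly int} := 'X^q.
  set S := gp (Sg q false 0 1) N.
  set TS := gp (Tg q false 0 1) N.
  set FS := gp (Fg q false 0 1) N.
  set C := gp (Sg q false 1 0) N.
  set T := gp (Tg q false 1 0) N.
  set F := gp (Fg q false 1 0) N.
  have hA := @ZB q false 1 0 N hq.
  have hC := @ZD q false 1 0 N hq.
  have hE := @ZF q false 1 0 N hq.
  have hB := @ZB q false 0 1 N hq.
  have hD := @ZD q false 0 1 N hq.
  have hF := @ZF q false 0 1 N hq.
  rewrite -/x -/y -/S -/TS -/FS -/C -/T -/F in hA hC hE hB hD hF.
  have Dd : den q = 1 - 2%:R * x + y * x * x.
    rewrite /den -mul_polyC polyCMn polyC1 exprD -/y expr2 -/x; ring.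
  have Xs : 'X^(q.+1) = y * x :> {poly int} by rewrite exprSr.
  rewrite Xs in hE hF.
  have Eq : (q%:R : {poly int}) = (q - 1)%N%:R + 1.
    by rewrite natr1 subn1 prednK.

  rewrite /= in hA hC hE hB hD hF.
  pose e0 : {poly int} := 1. pose e1 : {poly int} := 0.
  pose w1 : {poly int} := 1. pose w2 : {poly int} := 1.
  pose al := (1 - x * y) * x + e0 * x * x * y - x * y * w1 * (1 - x).
  pose be := - e1 * x * (1 - x * y) - x * x * y * w2.
  pose den2 := 1 - 2%:R * x + y * x * x.
  apply: (Zq6 hB hF hD hC hA hE (k1 := den2 * (1 - x * y)) (k2 := - den2 * x) (k3 := - den2 * x * y)
    (k4 := - den2 * x * y * w1 - al * x * y + be * (1 - 2%:R * x) * y)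
    (k5 := al * (1 - x * y) + be * y * (1 - x)) (k6 := - al * x + be * (1 - 2%:R * x))).
  rewrite Dd /num0 -/x -/y /al /be /den2 /e0 /e1 /w1 /w2.
  rewrite !(mul0r, mul1r, polyC0, polyC1, mulr0, subr0, addr0, mul1r) ?polyCMn ?polyC1.
  clearbody x y S TS FS C T F. ring.
Qed.

Theorem corollary3 (q : nat) (hq : (1 <= q)%N) :
  (forall N : nat,
     take_poly N (den q ^+ 2 * gf_trunc (p1 q) N) = take_poly N (num1 q)) /\
  (forall N : nat,
     take_poly N (den q ^+ 2 * gf_trunc (p0 q) N) = take_poly N (num0 q)).
Proof.
split => N.
- have -> : gf_trunc (p1 q) N = gp (Sg q true 0 1) N.
    by apply: eq_poly => i _; rewrite /p1 gf_link.
  by apply: take_eq; exact (@main_rel q true N hq).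
- have -> : gf_trunc (p0 q) N = gp (Sg q false 0 1) N.
    by apply: eq_poly => i _; rewrite /p0 gf_link.
  by apply: take_eq; exact (@main_rel q false N hq).
Qed.
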